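(* For $n\ge1$ let $\mathbb{A}_n$ be $\mathbb{C}^n$ with basis $e_1,\dots,e_n$ and product $(a\cdot b)^i=a^ib^n$, i.e. $e_i\cdot e_j=\delta_j^n e_i$. Then for every $n$, $\mathbb{A}_n$ is an associative Novikov algebra; if $n\ge2$ it is non-commutative and the Lie algebra $(\mathbb{A}_n,[a,b]=a\cdot b-b\cdot a)$ is not nilpotent. Moreover: (i) every symmetric bilinear form $g$ on $\mathbb{A}_n$ satisfies $g(a\cdot b,c)=g(a,c\cdot b)$ for all $a,b,c$; (ii) a skew-symmetric bilinear form $f=(f_{ij})$ on $\mathbb{A}_n$ satisfies $f(a\cdot b,c)=f(a,c\cdot b)$ and $f(a\cdot b,c)+f(b\cdot c,a)+f(c\cdot a,b)=0$ for all $a,b,c$ if and only if $f_{ij}=0$ whenever $i\ne n$ and $j\ne n$; (iii) a symmetric bilinear form $h=(h_{ij})$ on $\mathbb{A}_n$ satisfies $h(a\cdot b,c)=h(a,c\cdot b)$ and $h(a,b\cdot c)=h(a,c\cdot b)$ for all $a,b,c$ (i.e. $h(a\cdot b,c)$ is totally symmetric) if and only if $h_{ij}=0$ whenever $i\ne n$ or $j\ne n$.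
   Context: A Novikov algebra is a complex vector space with a bilinear product $\cdot$ satisfying $(a\cdot b)\cdot c=(a\cdot c)\cdot b$ and $(a\cdot b)\cdot c-a\cdot(b\cdot c)=(b\cdot a)\cdot c-b\cdot(a\cdot c)$ for all $a,b,c$. For a bilinear form $f$, $f_{ij}=f(e_i,e_j)$. *)

(* Defs.v *)
From HB Require Import structures.
From mathcomp Require Import all_boot all_order all_algebra.
From mathcomp Require Import complex.
From mathcomp Require Import Rstruct.
Set Implicit Arguments. Unset Strict Implicit. Unset Printing Implicit Defensive.
Import Order.TTheory GRing.Theory Num.Theory.
Local Open Scope ring_scope.

Definition CC : fieldType := (Rdefinitions.R)[i].

(* Vectors of A_n: row vectors of size n with complex entries; e_i = delta_mx 0 i. *)
Notation vec n := 'rV[CC]_n.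

Definition bilinear_prod (V : lmodType CC) (mul : V -> V -> V) : Prop :=
  (forall (k : CC) (a b c : V), mul (k *: a + b) c = k *: mul a c + mul b c) /\
  (forall (k : CC) (a b c : V), mul a (k *: b + c) = k *: mul a b + mul a c).

Definition is_novikov (V : lmodType CC) (mul : V -> V -> V) : Prop :=
  [/\ bilinear_prod mul,
      (forall a b c : V, mul (mul a b) c = mul (mul a c) b) &
      (forall a b c : V, mul (mul a b) c - mul a (mul b c)
                         = mul (mul b a) c - mul b (mul a c))].

Definition is_associative (V : Type) (mul : V -> V -> V) : Prop :=
  forall a b c : V, mul (mul a b) c = mul a (mul b c).

Definition is_commutative (V : Type) (mul : V -> V -> V) : Prop :=
  forall a b : V, mul a b = mul b a.

Definition commutator (V : zmodType) (mul : V -> V -> V) (a b : V) : V :=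
  mul a b - mul b a.

(* Nilpotency of a Lie algebra (V, br): some term of the lower central series
   g^1 = g, g^{k+1} = [g, g^k] vanishes; g^{k+1} is spanned by the right-nested
   brackets [x_1, [x_2, ..., [x_k, x]...]], which is what we quantify over. *)
Definition lie_nilpotent (V : zmodType) (br : V -> V -> V) : Prop :=
  exists k : nat, forall (x : V) (xs : seq V), size xs = k -> foldr br x xs = 0.

(* The n-th coordinate b^n of b (the last one); the sum has exactly one term
   when n >= 1. *)
Definition lastcoord (n : nat) (b : vec n) : CC :=
  \sum_(j < n | (j : nat) == n.-1) b 0 j.

Definition Amul (n : nat) (a b : vec n) : vec n := \row_i (a 0 i * lastcoord b).

(* Bilinear forms on C^n are given by their Gram matrices F, F i j = f(e_i,e_j). *)
Definition bform (n : nat) (F : 'M[CC]_n) (a b : vec n) : CC := (a *m F *m b^T) 0 0.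

(* Main.v *)
Require Import Defs.
From HB Require Import structures.
From mathcomp Require Import all_boot all_order all_algebra.
From mathcomp Require Import complex.
From mathcomp Require Import Rstruct.
From mathcomp Require Import ring.
Import GRing.Theory.
Local Open Scope ring_scope.

Lemma lastE n (N : 'I_n) (hN : (N : nat) = n.-1) (b : vec n) :
  lastcoord b = b 0 N.
Proof.
rewrite /lastcoord (big_pred1 N) // => j /=.
by rewrite -hN.
Qed.

Arguments lastE {n N} hN b.

Lemma AmulE n (a b : vec n) : Amul a b = lastcoord b *: a.
Proof. by apply/rowP => i; rewrite !mxE mulrC. Qed.

Lemma bformE n (F : 'M[CC]_n) a b :
  bform F a b = \sum_i \sum_j a 0 i * F i j * b 0 j.
Proof.
rewrite /bform mxE exchange_big /=; apply: eq_bigr => j _. idtac.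
rewrite [(a *m F) 0 j]mxE mulr_suml; apply: eq_bigr => i _; by rewrite !mxE.
Qed.

Lemma bformZl n (F : 'M[CC]_n) k a b : bform F (k *: a) b = k * bform F a b.
Proof.
rewrite !bformE mulr_sumr; apply: eq_bigr => i _; rewrite mulr_sumr.
by apply: eq_bigr => j _; rewrite !mxE; ring.
Qed.

Lemma bformZr n (F : 'M[CC]_n) k a b : bform F a (k *: b) = k * bform F a b.
Proof.
rewrite !bformE mulr_sumr; apply: eq_bigr => i _; rewrite mulr_sumr.
by apply: eq_bigr => j _; rewrite !mxE; ring.
Qed.

Lemma bform_delta n (F : 'M[CC]_n) i j :
  bform F (delta_mx 0 i) (delta_mx 0 j) = F i j.
Proof.
rewrite bformE (bigD1 i) //= [X in _ + X]big1; last first.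
  move=> k /negbTE hk; by apply: big1 => l _; rewrite !mxE hk /= !mul0r.
rewrite addr0 (bigD1 j) //= [X in _ + X]big1; last first.
  by move=> l /negbTE hl; rewrite !mxE hl /= !mulr0.
by rewrite !mxE !eqxx /= mul1r mulr1 addr0.
Qed.

Lemma sum_delta n (N : 'I_n) (g : 'I_n -> CC) :
  \sum_i ((i == N)%:R * g i) = g N.
Proof.
rewrite (bigD1 N) //= eqxx mul1r big1 ?addr0 // => i /negbTE ->.
by rewrite mul0r.
Qed.

Lemma foldr_nseq n (N O : 'I_n) (hNO : O != N) (hN : (N : nat) = n.-1) k :
  foldr (commutator (@Amul n)) (delta_mx 0 O) (nseq k (delta_mx 0 N))
  = (-1) ^+ k *: delta_mx 0 O.
Proof.
elim: k => [|k IH] /=; first by rewrite scale1r.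
rewrite IH /commutator !AmulE !(lastE hN) !mxE eqxx eq_sym (negbTE hNO) /=.
by rewrite mulr0 scale0r add0r eqxx scale1r exprS mulN1r scaleNr.
Qed.

Arguments foldr_nseq {n N O} hNO hN k.
Arguments sum_delta {n} N g.

Theorem proposition6p1 (n : nat) (hn : (1 <= n)%N) :
  [/\ is_novikov (@Amul n) /\ is_associative (@Amul n),
      (2 <= n)%N -> ~ is_commutative (@Amul n) /\
                    ~ lie_nilpotent (commutator (@Amul n)),
      (forall G : 'M[CC]_n, G^T = G ->
         forall a b c : vec n, bform G (Amul a b) c = bform G a (Amul c b)),
      (forall F : 'M[CC]_n, F^T = - F ->
         ((forall a b c : vec n, bform F (Amul a b) c = bform F a (Amul c b)) /\
          (forall a b c : vec n,
             bform F (Amul a b) c + bform F (Amul b c) a + bform F (Amul c a) b = 0))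
         <-> (forall i j : 'I_n, (i : nat) != n.-1 -> (j : nat) != n.-1 -> F i j = 0))
    & (forall H : 'M[CC]_n, H^T = H ->
         ((forall a b c : vec n, bform H (Amul a b) c = bform H a (Amul c b)) /\
          (forall a b c : vec n, bform H a (Amul b c) = bform H a (Amul c b)))
         <-> (forall i j : 'I_n, ((i : nat) != n.-1) || ((j : nat) != n.-1) ->
                H i j = 0))].
Proof.
have hN' : (n.-1 < n)%N by rewrite ltn_predL.
pose N := Ordinal hN'.
have hN : (N : nat) = n.-1 by [].
have lin : forall (k : CC) (a b : vec n),
    lastcoord (k *: a + b) = k * lastcoord a + lastcoord b.
  by move=> k a b; rewrite !(lastE hN) !mxE.
have linZ : forall (k : CC) (a : vec n), lastcoord (k *: a) = k * lastcoord a.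
  by move=> k a; rewrite !(lastE hN) !mxE.
have ldelta : forall i : 'I_n, lastcoord (delta_mx 0 i) = (N == i)%:R.
  by move=> i; rewrite (lastE hN) mxE eqxx.
have gen : forall (G : 'M[CC]_n) (a b c : vec n),
    bform G (Amul a b) c = bform G a (Amul c b).
  by move=> G a b c; rewrite !AmulE bformZl bformZr.
split.
- split; last first.
    move=> a b c; rewrite !AmulE scalerA.
    by rewrite linZ.
  split.
  + split=> k a b c; rewrite !AmulE.
      by rewrite scalerDr !scalerA mulrC.
    by rewrite lin scalerDl scalerA.
  + by move=> a b c; rewrite !AmulE !scalerA mulrC.
  + move=> a b c; rewrite !AmulE !scalerA.
    by rewrite !linZ mulrC subrr [lastcoord c * _]mulrC subrr.
- move=> h2.
  have hO' : (0 < n)%N by [].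
  pose O := Ordinal hO'.
  have hNO : O != N.
    apply/negP => /eqP/(congr1 val) /=; move=> h0.
    by move: h2; rewrite h0 -(ltn_predK hn) -h0.
  have e0 : (delta_mx 0 O : vec n) 0 O = 1 by rewrite mxE !eqxx.
  split.
    move=> hc; have := hc (delta_mx 0 O) (delta_mx 0 N).
    rewrite !AmulE !ldelta eqxx eq_sym (negbTE hNO) scale1r scale0r.
    move/(congr1 (fun v : vec n => v 0 O)); rewrite e0 mxE => h10.
    by move/eqP: h10; rewrite oner_eq0.
  case=> k hk.
  have := hk (delta_mx 0 O) (nseq k (delta_mx 0 N)) (size_nseq _ _).
  rewrite (foldr_nseq hNO hN).
  move/(congr1 (fun v : vec n => v 0 O)); rewrite mxE e0 mulr1 mxE => h.
  by move/eqP: h; rewrite expf_eq0 oppr_eq0 oner_eq0 andbF.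
- by move=> G _; apply: gen.
- move=> F hF.
  have Fs : forall i j, F i j = - F j i.
    by move=> i j; have := congr1 (fun M : 'M[CC]_n => M j i) hF; rewrite !mxE.
  have FNN : F N N = 0.
    have h := Fs N N.
    have : F N N *+ 2 = 0 by rewrite mulr2n {1}h addNr.
    by move/eqP; rewrite Num.Theory.mulrn_eq0 /= => /eqP.
  split.
  + case=> _ hcyc i j hi hj.
    have := hcyc (delta_mx 0 i) (delta_mx 0 N) (delta_mx 0 j).
    rewrite !AmulE !bformZl !bform_delta !ldelta eqxx.
    have -> : (N == j) = false by apply/negbTE; apply/negP => /eqP e; move: hj; rewrite -e eqxx.
    have -> : (N == i) = false by apply/negbTE; apply/negP => /eqP e; move: hi; rewrite -e eqxx.
    by rewrite !mul0r !addr0 mul1r.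
  + move=> hz; split; first by move=> *; apply: gen.
    pose phi (x : vec n) := \sum_j F N j * x 0 j.
    have bf : forall a c : vec n,
        bform F a c = a 0 N * phi c - c 0 N * phi a.
      move=> a c; rewrite bformE.
      have -> : \sum_i \sum_j a 0 i * F i j * c 0 j =
          \sum_i ((i == N)%:R * (a 0 i * phi c) + a 0 i * F i N * c 0 N).
        apply: eq_bigr => i _.
        have Fd : forall j, F i j = (i == N)%:R * F N j + (i != N)%:R * ((j == N)%:R * F i N).
          move=> j; case: (eqVneq i N) => [->|hi] /=.
            by rewrite mul1r mul0r addr0.
          rewrite mul0r add0r mul1r; case: (eqVneq j N) => [->|hj].
            by rewrite mul1r.
          rewrite mul0r; apply: hz; first by apply/eqP => e; move/eqP: hi; apply; apply: val_inj.
          by apply/eqP => e; move/eqP: hj; apply; apply: val_inj.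
        under eq_bigr => j _ do rewrite Fd.
        case: (eqVneq i N) => [->|hi] /=.
          rewrite mul1r /phi mulr_sumr.
          rewrite -(sum_delta N (fun j => a 0 N * F N N * c 0 N)) -big_split /=.
          apply: eq_bigr => j _; rewrite FNN; ring.
        rewrite mul0r add0r (bigD1 N) //= big1 => [|j /negbTE ->]; last by rewrite /=; ring.
        by rewrite eqxx /=; ring.
      rewrite big_split /= sum_delta -mulr_suml.
      have -> : \sum_i a 0 i * F i N = - phi a.
        rewrite /phi -sumrN; apply: eq_bigr => i _; rewrite Fs; ring.
      ring.
    move=> a b c; rewrite !AmulE !bformZl !bf !(lastE hN); ring.
- move=> H hH.
  have Hs : forall i j, H i j = H j i.
    by move=> i j; have := congr1 (fun M : 'M[CC]_n => M j i) hH; rewrite !mxE.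
  have neqN : forall i : 'I_n, (i : nat) != n.-1 -> (N == i) = false.
    by move=> i hi; apply/negbTE; apply/negP => /eqP e; move: hi; rewrite -e eqxx.
  split.
  + case=> _ h.
    have key : forall i j : 'I_n, (j : nat) != n.-1 -> H i j = 0.
      move=> i j hj.
      have := h (delta_mx 0 i) (delta_mx 0 j) (delta_mx 0 N).
      rewrite !AmulE !bformZr !bform_delta !ldelta eqxx neqN //.
      by rewrite mul1r mul0r.
    move=> i j /orP [hi|hj]; last exact: key.
    by rewrite Hs key.
  + move=> hz; split; first by move=> *; apply: gen.
    have bf : forall a b : vec n, bform H a b = a 0 N * b 0 N * H N N.
      move=> a b; rewrite bformE (bigD1 N) //= [X in _ + X]big1; last first.
        move=> i hi; apply: big1 => j _; rewrite hz ?mulr0 ?mul0r //.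
        by apply/orP; left; apply/eqP => e; move/eqP: hi; apply; apply: val_inj.
      rewrite addr0 (bigD1 N) //= [X in _ + X]big1; last first.
        move=> j hj; rewrite hz ?mulr0 ?mul0r //.
        by apply/orP; right; apply/eqP => e; move/eqP: hj; apply; apply: val_inj.
      by rewrite addr0; ring.
    move=> a b c; rewrite !AmulE !bformZr !bf !(lastE hN); ring.
Qed.
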